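(* Let $\gamma_+,\gamma_-\ge 0$ with $(\gamma_+,\gamma_-)\neq(0,0)$, and let $\mu\in\mathbb{R}$. Define for $x\in(0,1]$ $$f(x)=\gamma_-x+\gamma_+\ln x,\qquad g(x)=\gamma_-\ln x-\frac{\gamma_+}{x},$$ $$\Delta(x)=\gamma_++\gamma_--\frac{\gamma_+}{x}-\gamma_-x+(\gamma_--\gamma_+-\mu)\ln x,$$ and for $x\in(0,1)$, $h(x)=\dfrac{\gamma_-x+\gamma_+/x-(\gamma_++\gamma_-)}{\ln x}$. Let $(z_n)_{n\ge0}$ be a sequence with $0<z_n\le1$ for all $n$ and $z_0<1$, satisfying $$2[f(z_1)-f(z_0)]=\Delta(z_0),$$ $$(n+2)[f(z_{n+1})-f(z_n)]=n[g(z_n)-g(z_{n-1})]+\Delta(z_n)\quad\text{for all } n\ge1.$$ Then: if $h(z_0)>\gamma_--\gamma_+-\mu$, the sequence $(z_n)$ is strictly increasing; if $h(z_0)<\gamma_--\gamma_+-\mu$, it is strictly decreasing; and $(z_n)$ is constant if and only if $h(z_0)=\gamma_--\gamma_+-\mu$. In particular $(z_n)$ is either strictly increasing, strictly decreasing, or constant.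
   Context: These equations are the stationarity conditions of a Lagrange-multiplier problem, where $z_n=p_{n+1}/p_n$ are ratios of consecutive eigenvalues of a passive state with infinite Fock support, but the claim is purely about real sequences as stated. *)

(* Defs.v *)
From Stdlib Require Import Reals.
Open Scope R_scope.

Definition f_fun (gp gm x : R) : R := gm * x + gp * ln x.
Definition g_fun (gp gm x : R) : R := gm * ln x - gp / x.
Definition Delta_fun (gp gm mu x : R) : R :=
  gp + gm - gp / x - gm * x + (gm - gp - mu) * ln x.
Definition h_fun (gp gm x : R) : R :=
  (gm * x + gp / x - (gp + gm)) / ln x.

Definition strictly_increasing (z : nat -> R) : Prop := forall n, z n < z (S n).
Definition strictly_decreasing (z : nat -> R) : Prop := forall n, z (S n) < z n.
Definition constant_seq (z : nat -> R) : Prop := forall n, z n = z 0%nat.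

(* Main.v *)
Require Import Defs.
From Stdlib Require Import Reals Lra Lia Psatz.
Open Scope R_scope.

Lemma ln_tan (z : R) : 0 < z -> ln z <= z - 1.
Proof. intros Hz. pose proof (exp_ineq1_le (ln z)). rewrite exp_ln in H; lra. Qed.

Lemma ln_le' (x y : R) : 0 < x -> x <= y -> ln x <= ln y.
Proof. intros Hx [H|H]. - left; apply ln_increasing; lra. - subst; lra. Qed.

Lemma ln_neg (x : R) : 0 < x -> x < 1 -> ln x < 0.
Proof. intros. rewrite <- ln_1. apply ln_increasing; lra. Qed.

Lemma ln_conc (t l : R) : 0 < t -> 0 <= l <= 1 -> l * ln t <= ln (l * t + (1 - l)).
Proof.
  intros Ht Hl. set (y := l * t + (1 - l)).
  assert (Hy : 0 < y).
  { unfold y. destruct (Req_dec l 0). subst; lra.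
    assert (0 < l * t) by (apply Rmult_lt_0_compat; lra). lra. }
  assert (H1 : ln t - ln y <= t / y - 1).
  { replace (ln t - ln y) with (ln (t * / y))
      by (rewrite ln_mult, ln_Rinv by (try apply Rinv_0_lt_compat; lra); ring).
    apply ln_tan. apply Rmult_lt_0_compat; [lra| apply Rinv_0_lt_compat; lra]. }
  assert (H2 : - ln y <= 1 / y - 1).
  { rewrite <- ln_Rinv by lra. replace (1 / y) with (/ y) by (field; lra).
    apply ln_tan. apply Rinv_0_lt_compat; lra. }
  assert (E : l * (t / y - 1) + (1 - l) * (1 / y - 1) = 0).
  { unfold y in *. field. lra. }
  assert (l * (ln t - ln y) <= l * (t / y - 1)) by (apply Rmult_le_compat_l; lra).
  assert ((1 - l) * (- ln y) <= (1 - l) * (1 / y - 1)) by (apply Rmult_le_compat_l; lra).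
  nra.
Qed.

Lemma ineqA (x y : R) : 0 < x -> x < y -> y < 1 -> (1 - y) * ln x <= (1 - x) * ln y.
Proof.
  intros Hx Hxy Hy. pose proof (ln_conc x ((1 - y) / (1 - x))) as H.
  replace ((1 - y) / (1 - x) * x + (1 - (1 - y) / (1 - x))) with y in H by (field; lra).
  assert (0 <= (1 - y) / (1 - x) <= 1).
  { split. apply Rle_mult_inv_pos; lra.
    apply (Rmult_le_reg_r (1 - x)); [lra|]. unfold Rdiv. rewrite Rmult_assoc, Rinv_l by lra. lra. }
  specialize (H ltac:(lra) H0).
  apply (Rmult_le_compat_l (1 - x)) in H; [|lra].
  replace ((1 - x) * ((1 - y) / (1 - x) * ln x)) with ((1 - y) * ln x) in H by (field; lra).
  lra.
Qed.

Lemma ineqB (x y : R) : 0 < x -> x < y -> y < 1 -> (/ x - 1) * ln y <= (/ y - 1) * ln x.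
Proof.
  intros Hx Hxy0 Hy. assert (Hxy : /y < /x) by (apply Rinv_lt_contravar; nra).
  assert (Hy1 : 1 < / y).
  { rewrite <- Rinv_1. apply Rinv_lt_contravar; lra. }
  pose proof (ln_conc (/ x) ((/ y - 1) / (/ x - 1))) as H.
  replace ((/ y - 1) / (/ x - 1) * / x + (1 - (/ y - 1) / (/ x - 1))) with (/ y) in H
    by (field; repeat split; try lra; intro; assert (/x = 1) by lra; lra).
  assert (0 <= (/ y - 1) / (/ x - 1) <= 1).
  { split. apply Rle_mult_inv_pos; lra.
    apply (Rmult_le_reg_r (/ x - 1)); [lra|]. unfold Rdiv. rewrite Rmult_assoc, Rinv_l by lra. lra. }
  specialize (H ltac:(apply Rinv_0_lt_compat; lra) H0).
  rewrite !ln_Rinv in H by lra.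
  apply (Rmult_le_compat_l (/ x - 1)) in H; [|lra].
  replace ((/ x - 1) * ((/ y - 1) / (/ x - 1) * - ln x)) with (- ((/ y - 1) * ln x)) in H
    by (field; repeat split; lra).
  lra.
Qed.

Lemma h_mono (gp gm x y : R) : 0 <= gp -> 0 <= gm -> 0 < x -> x <= y -> y < 1 ->
  h_fun gp gm x <= h_fun gp gm y.
Proof.
  intros Hp Hm Hx [Hxy|Hxy] Hy; [|subst; lra].
  pose proof (ln_neg x Hx ltac:(lra)). pose proof (ln_neg y ltac:(lra) Hy).
  pose proof (ineqA x y Hx Hxy Hy). pose proof (ineqB x y Hx Hxy Hy).
  unfold h_fun.
  assert (E : forall u, 0 < u -> (gm * u + gp / u - (gp + gm)) / ln u
               = (gm * (u - 1) + gp * (/ u - 1)) / ln u).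
  { intros u Hu. f_equal. field. lra. }
  rewrite !E by lra.
  assert (0 < ln x * ln y) by nra.
  apply (Rmult_le_reg_r (ln x * ln y)); [lra|].
  replace ((gm * (x - 1) + gp * (/ x - 1)) / ln x * (ln x * ln y))
    with ((gm * (x - 1) + gp * (/ x - 1)) * ln y) by (field; lra).
  replace ((gm * (y - 1) + gp * (/ y - 1)) / ln y * (ln x * ln y))
    with ((gm * (y - 1) + gp * (/ y - 1)) * ln x) by (field; lra).
  assert (gm * ((x - 1) * ln y) <= gm * ((y - 1) * ln x)) by (apply Rmult_le_compat_l; lra).
  assert (gp * ((/x - 1) * ln y) <= gp * ((/y - 1) * ln x)) by (apply Rmult_le_compat_l; lra).
  nra.
Qed.

Lemma Delta_h (gp gm mu x : R) : 0 < x -> x < 1 ->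
  Delta_fun gp gm mu x = ln x * ((gm - gp - mu) - h_fun gp gm x).
Proof.
  intros. pose proof (ln_neg x H H0). unfold Delta_fun, h_fun. field. split; lra.
Qed.

Lemma Delta_1 (gp gm mu : R) : Delta_fun gp gm mu 1 = 0.
Proof. unfold Delta_fun. rewrite ln_1. field. Qed.

Lemma f_mono (gp gm x y : R) : 0 <= gp -> 0 <= gm -> (gp <> 0 \/ gm <> 0) ->
  0 < x -> x < y -> f_fun gp gm x < f_fun gp gm y.
Proof.
  intros Hp Hm Hn Hx Hxy. unfold f_fun. pose proof (ln_increasing x y Hx Hxy).
  destruct Hn as [Hq|Hq].
  - assert (gp * ln x < gp * ln y) by (apply Rmult_lt_compat_l; lra).
    assert (gm * x <= gm * y) by (apply Rmult_le_compat_l; lra). lra.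
  - assert (gp * ln x <= gp * ln y) by (apply Rmult_le_compat_l; lra).
    assert (gm * x < gm * y) by (apply Rmult_lt_compat_l; lra). lra.
Qed.

Lemma g_mono (gp gm x y : R) : 0 <= gp -> 0 <= gm -> (gp <> 0 \/ gm <> 0) ->
  0 < x -> x < y -> g_fun gp gm x < g_fun gp gm y.
Proof.
  intros Hp Hm Hn Hx Hxy. unfold g_fun. pose proof (ln_increasing x y Hx Hxy).
  assert (/ y < / x) by (apply Rinv_lt_contravar; nra).
  unfold Rdiv.
  destruct Hn as [Hq|Hq].
  - assert (gp * / y < gp * / x) by (apply Rmult_lt_compat_l; lra).
    assert (gm * ln x <= gm * ln y) by (apply Rmult_le_compat_l; lra). lra.
  - assert (gp * / y <= gp * / x) by (apply Rmult_le_compat_l; lra).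
    assert (gm * ln x < gm * ln y) by (apply Rmult_lt_compat_l; lra). lra.
Qed.

Lemma f_rev (gp gm x y : R) : 0 <= gp -> 0 <= gm -> (gp <> 0 \/ gm <> 0) ->
  0 < x -> 0 < y -> f_fun gp gm x < f_fun gp gm y -> x < y.
Proof.
  intros. destruct (Rlt_le_dec x y) as [|[H5|H5]]; auto.
  - pose proof (f_mono gp gm y x H H0 H1 H3 H5). lra.
  - subst; lra.
Qed.

Lemma f_inj (gp gm x y : R) : 0 <= gp -> 0 <= gm -> (gp <> 0 \/ gm <> 0) ->
  0 < x -> 0 < y -> f_fun gp gm x = f_fun gp gm y -> x = y.
Proof.
  intros. destruct (Rtotal_order x y) as [H5|[H5|H5]]; auto.
  - pose proof (f_mono gp gm x y H H0 H1 H2 H5). lra.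
  - pose proof (f_mono gp gm y x H H0 H1 H3 H5). lra.
Qed.

Theorem lemma3 (gp gm mu : R) (z : nat -> R) :
  0 <= gp -> 0 <= gm -> (gp <> 0 \/ gm <> 0) ->
  (forall n, 0 < z n <= 1) -> z 0%nat < 1 ->
  2 * (f_fun gp gm (z 1%nat) - f_fun gp gm (z 0%nat)) = Delta_fun gp gm mu (z 0%nat) ->
  (forall n : nat, (1 <= n)%nat ->
     (INR n + 2) * (f_fun gp gm (z (S n)) - f_fun gp gm (z n))
     = INR n * (g_fun gp gm (z n) - g_fun gp gm (z (pred n))) + Delta_fun gp gm mu (z n)) ->
  (h_fun gp gm (z 0%nat) > gm - gp - mu -> strictly_increasing z) /\
  (h_fun gp gm (z 0%nat) < gm - gp - mu -> strictly_decreasing z) /\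
  (constant_seq z <-> h_fun gp gm (z 0%nat) = gm - gp - mu) /\
  (strictly_increasing z \/ strictly_decreasing z \/ constant_seq z).
Proof.
  intros Hp Hm Hn Hz Hz0 H0 Hrec.
  set (A := gm - gp - mu).
  pose proof (ln_neg (z 0%nat) (proj1 (Hz 0%nat)) Hz0) as Hl0.
  assert (INC : h_fun gp gm (z 0%nat) > A -> strictly_increasing z).
  { intros Hh.
    assert (Q : forall n, z 0%nat <= z n /\ z n < z (S n)).
    { induction n as [|n [IH1 IH2]].
      - split; [lra|]. apply (f_rev gp gm); auto; try apply Hz.
        rewrite Delta_h in H0 by (try apply Hz; lra).
        assert (0 < ln (z 0%nat) * (A - h_fun gp gm (z 0%nat))) by nra. unfold A in *. lra.
      - split; [lra|]. apply (f_rev gp gm); auto; try apply Hz.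
        specialize (Hrec (S n) ltac:(lia)). simpl pred in Hrec.
        pose proof (g_mono gp gm (z n) (z (S n)) Hp Hm Hn (proj1 (Hz n)) IH2).
        assert (HD : 0 <= Delta_fun gp gm mu (z (S n))).
        { destruct (Hz (S n)) as [Ha [Hb|Hb]].
          - rewrite Delta_h by lra. pose proof (ln_neg _ Ha Hb).
            pose proof (h_mono gp gm (z 0%nat) (z (S n)) Hp Hm (proj1 (Hz 0%nat)) ltac:(lra) Hb).
            unfold A in *. nra.
          - rewrite Hb, Delta_1; lra. }
        pose proof (pos_INR n). rewrite S_INR in Hrec.
        assert (0 < (INR n + 1) * (g_fun gp gm (z (S n)) - g_fun gp gm (z n))) by nra.
        nra. }
    intro n. apply Q. }
  assert (DEC : h_fun gp gm (z 0%nat) < A -> strictly_decreasing z).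
  { intros Hh.
    assert (Q : forall n, z n <= z 0%nat /\ z (S n) < z n).
    { induction n as [|n [IH1 IH2]].
      - split; [lra|]. apply (f_rev gp gm); auto; try apply Hz.
        rewrite Delta_h in H0 by (try apply Hz; lra).
        assert (ln (z 0%nat) * (A - h_fun gp gm (z 0%nat)) < 0) by nra. unfold A in *. lra.
      - split; [lra|]. apply (f_rev gp gm); auto; try apply Hz.
        specialize (Hrec (S n) ltac:(lia)). simpl pred in Hrec.
        pose proof (g_mono gp gm (z (S n)) (z n) Hp Hm Hn (proj1 (Hz (S n))) IH2).
        assert (HD : Delta_fun gp gm mu (z (S n)) < 0).
        { destruct (Hz (S n)) as [Ha _].
          rewrite Delta_h by lra. pose proof (ln_neg (z (S n)) Ha ltac:(lra)).
          pose proof (h_mono gp gm (z (S n)) (z 0%nat) Hp Hm Ha ltac:(lra) Hz0).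
          unfold A in *. nra. }
        pose proof (pos_INR n). rewrite S_INR in Hrec.
        assert ((INR n + 1) * (g_fun gp gm (z (S n)) - g_fun gp gm (z n)) < 0) by nra.
        nra. }
    intro n. apply Q. }
  assert (CST : constant_seq z <-> h_fun gp gm (z 0%nat) = A).
  { split.
    - intros Hc. rewrite (Hc 1%nat) in H0. rewrite Delta_h in H0 by (try apply Hz; lra).
      assert (ln (z 0%nat) * (A - h_fun gp gm (z 0%nat)) = 0) by (unfold A; lra).
      apply Rmult_integral in H. destruct H; lra.
    - intros Hh.
      assert (Q : forall n, z n = z 0%nat /\ z (S n) = z 0%nat).
      { induction n as [|n [IH1 IH2]].
        - split; [reflexivity|]. apply (f_inj gp gm); auto; try apply Hz.
          rewrite Delta_h in H0 by (try apply Hz; lra). fold A in H0. rewrite Hh in H0. lra.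
        - split; [exact IH2|].
          specialize (Hrec (S n) ltac:(lia)). simpl pred in Hrec.
          rewrite IH1, IH2 in Hrec. rewrite Delta_h in Hrec by (try apply Hz; lra).
          fold A in Hrec. rewrite Hh in Hrec.
          rewrite <- IH2. apply (f_inj gp gm); auto; try apply Hz.
          pose proof (pos_INR (S n)).
          assert ((INR (S n) + 2) * (f_fun gp gm (z (S (S n))) - f_fun gp gm (z 0%nat)) = 0) by lra.
          apply Rmult_integral in H1. rewrite IH2. destruct H1; lra. }
      intro n. apply Q. }
  fold A. split; [exact INC|]. split; [exact DEC|]. split; [exact CST|].
  destruct (Rtotal_order (h_fun gp gm (z 0%nat)) A) as [H|[H|H]].
  - right; left; auto.
  - right; right; apply CST; auto.
  - left; auto.
Qed.
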